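(* Let $\mu\in(\mathbb Z^n_{\ge0})_+$, let $\ell\in[n]$ with $\ell\ge\ell(\mu)$, and let $F\in B(\varpi_\ell)$ be such that $F\otimes T^0_\mu$ is semistandard. Then $$\Psi_{F\otimes T^0_\mu}=t^{\ell(u_F)}(T_{u_F^{-1}})^{-1}\mathbf 1_{\varpi_\ell+\mu}.$$ In particular $\Psi_{T^0_\lambda}=\mathbf 1_\lambda$ for every $\lambda\in(\mathbb Z^n_{\ge0})_+$.
   Context: Fix $n\ge1$, $[n]=\{1,\dots,n\}$. $S_n$ with simple transpositions $s_i$ and length $\ell(\cdot)$ acts on $\mathbb Z^n$ by permuting coordinates; $\varpi_k=\varepsilon_1+\dots+\varepsilon_k$. $(\mathbb Z^n_{\ge0})_+=\{\lambda\in\mathbb Z^n_{\ge0}:\lambda_1\ge\dots\ge\lambda_n\}$, $\ell(\mu)$ = number of nonzero parts. $S_{n,\lambda}$ is the stabilizer of $\lambda$. The affine Hecke algebra $H$ is the $\mathbb Z[t^{\pm1}]$-algebra with generators $T_1,\dots,T_{n-1},X_1^{\pm1},\dots,X_n^{\pm1}$ and relations $T_i^2=(t-1)T_i+t$, $T_iT_{i+1}T_i=T_{i+1}T_iT_{i+1}$, $T_iT_j=T_jT_i$ ($|i-j|>1$), $X_iX_j=X_jX_i$, $T_iX_iT_i=tX_{i+1}$, $T_iX_j=X_jT_i$ ($j\notin\{i,i+1\}$). $T_w=T_{i_1}\cdots T_{i_m}$ for a reduced word of $w$. $H_n=\mathrm{span}\{T_w:w\in S_n\}$, $H_{n,\lambda}=\mathrm{span}\{T_w:w\in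 S_{n,\lambda}\}$, $\mathbf 1_\lambda=\sum_{w\in S_{n,\lambda}}T_w$. Columns: $B(\varpi_\ell)$ is the set of $C=(c_1<\dots<c_\ell)\subseteq[n]$; $u_C\in S_n$ sends $k\mapsto c_k$ ($k\le\ell$) and sends $\ell+1,\dots,n$ increasingly onto $[n]\setminus C$. Tensors $T=C_r\otimes\cdots\otimes C_1$ ($C_i\in B(\varpi_{\ell_i})$, $\ell_1\le\dots\le\ell_r$) are fillings of the Young diagram of $\sum\varpi_{\ell_i}$ with columns $C_r,\dots,C_1$ left to right; semistandard means rows weakly increase left to right. For $\mu\in(\mathbb Z^n_{\ge0})_+$, $T^0_\mu$ is the tableau of shape $\mu$ whose row $i$ is filled with $i$ (all columns equal to $(1,\dots,m)$); $T^0_0$ is empty and $F\otimes T^0_0=F$. $\Psi$: each $h\in H_n$ is uniquely $\sum_{F\in B(\varpi_\ell)}T_{u_F}h_F$ with $h_F\in H_{n,\varpi_\ell}$. For a column $C\in B(\varpi_\ell)$, $\Psi_C=t^{\ell(u_C)}(T_{u_C^{-1}})^{-1}\mathbf 1_{\varpi_\ell}$; for $T=C\otimes S$ ($C\in B(\varpi_\ell)$, $S$ with columns of length $\le\ell$), write $\Psi_S=\sum_{E\in B(\varpi_\ell)}T_{u_E}h_{E,S}$ ($h_{E,S}\in H_{n,\varpi_\ell}$) and set $\Psi_T=t^{\ell(u_C)}(T_{u_C^{-1}})^{-1}h_{C,S}$. *)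

(* Defs.v *)
From HB Require Import structures.
From mathcomp Require Import all_boot all_order all_algebra all_fingroup.
From mathcomp Require classical_sets.
Set Implicit Arguments. Unset Strict Implicit. Unset Printing Implicit Defensive.
Import GRing.Theory.
Local Open Scope ring_scope.

(* Conventions: [n] = {1..n} is modelled by 'I_n = {0..n-1};
   permutations are {perm 'I_n}; composition (f o g) is [pcomp f g] = g * f
   (mathcomp's product is left-to-right). *)

Section Hecke.
Variables (R : comUnitRingType) (t : R) (n : nat).

Definition pcomp (f g : 'S_n) : 'S_n := (g * f)%g.

Definition plen (w : 'S_n) : nat :=
  #|[set p : 'I_n * 'I_n | (p.1 < p.2)%N && (w p.2 < w p.1)%N]|.

(* simple transposition s_i = (i, i+1) (used only for i.+1 < n) *)
Definition sgen (i : 'I_n) : 'S_n := tperm i (insubd i i.+1).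

(* elements of H_n: coefficient vectors on the basis (T_w)_{w in S_n} *)
Local Notation hecke := {ffun 'S_n -> R}.

Definition hscale (k : R) (h : hecke) : hecke := [ffun v => k * h v].

Definition Tb (w : 'S_n) : hecke := [ffun v => (v == w)%:R].

(* left multiplication by T_i:
   T_i T_w = T_{s_i w} if l(s_i w) > l(w), (t-1) T_w + t T_{s_i w} otherwise *)
Definition Tleft (i : 'I_n) (h : hecke) : hecke :=
  [ffun v => if (plen (pcomp (sgen i) v) < plen v)%N
             then h (pcomp (sgen i) v) + (t - 1) * h v
             else t * h (pcomp (sgen i) v)].

Fixpoint redword_aux (k : nat) (w : 'S_n) : seq 'I_n :=
  if k is k'.+1 then
    if [pick i : 'I_n | (i.+1 < n)%N && (plen (pcomp (sgen i) w) < plen w)%N]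
      is Some i then i :: redword_aux k' (pcomp (sgen i) w) else [::]
  else [::].
Definition redword (w : 'S_n) : seq 'I_n := redword_aux (plen w) w.

(* T_w * h  with T_w = T_{i_1} ... T_{i_m} for the reduced word i_1 ... i_m *)
Definition Tw_mul (w : 'S_n) (h : hecke) : hecke := foldr Tleft h (redword w).

Definition hmul (h g : hecke) : hecke := \sum_(w : 'S_n) hscale (h w) (Tw_mul w g).

Definition hone : hecke := Tb 1%g.

Definition hinv (h : hecke) : hecke :=
  classical_sets.xget 0 (fun g => hmul h g = hone /\ hmul g h = hone).

Definition is_partition (la : 'I_n -> nat) : Prop :=
  forall i j : 'I_n, (i <= j)%N -> (la j <= la i)%N.
Definition plength (mu : 'I_n -> nat) : nat := #|[set i | mu i != 0%N]|.
Definition varpi (l : nat) : 'I_n -> nat := fun j => (j < l)%N.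
Definition wadd (a b : 'I_n -> nat) : 'I_n -> nat := fun j => (a j + b j)%N.

Definition stab (la : 'I_n -> nat) : {set 'S_n} :=
  [set w : 'S_n | [forall j, la (w j) == la j]].

(* 1_la = sum_{w in S_{n,la}} T_w *)
Definition one_ (la : 'I_n -> nat) : hecke := [ffun w => (w \in stab la)%:R].

(* H_{n,la} = span{T_w : w in S_{n,la}} *)
Definition in_Hla (la : 'I_n -> nat) (h : hecke) : Prop :=
  forall w, w \notin stab la -> h w = 0.

(* columns C in B(varpi_l): subsets of 'I_n of cardinality l;
   u_C : k |-> c_k (k < l), and l,...,n-1 increasingly onto the complement *)
Definition ucol_fun (C : {set 'I_n}) (k : 'I_n) : 'I_n :=
  nth k (enum C ++ enum (~: C)) k.
Definition ucol (C : {set 'I_n}) : 'S_n :=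
  odflt 1%g [pick w : 'S_n | [forall k, w k == ucol_fun C k]].

Definition tpow (k : nat) : R := t ^+ k.

Definition is_decomp (l : nat) (h : hecke) (f : {ffun {set 'I_n} -> hecke}) : Prop :=
  h = \sum_(F : {set 'I_n} | #|F| == l) hmul (Tb (ucol F)) (f F)
  /\ (forall F : {set 'I_n}, #|F| = l -> in_Hla (varpi l) (f F))
  /\ (forall F : {set 'I_n}, #|F| <> l -> f F = 0).
Definition decomp (l : nat) (h : hecke) : {ffun {set 'I_n} -> hecke} :=
  classical_sets.xget 0 (is_decomp l h).

Definition Tpref (C : {set 'I_n}) : hecke :=
  hscale (tpow (plen (ucol C))) (hinv (Tb ((ucol C)^-1)%g)).

(* tensors C_r (x) ... (x) C_1 as the list [:: C_r; ...; C_1] of columns,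
   left to right.  Psi of the empty tensor is set to 1_0 (convention). *)
Fixpoint Psi (T : seq {set 'I_n}) : hecke :=
  match T with
  | [::] => one_ (fun _ => 0%N)
  | [:: C] => hmul (Tpref C) (one_ (varpi #|C|))
  | C :: Sr => hmul (Tpref C) (decomp #|C| (Psi Sr) C)
  end.

(* semistandard: column lengths weakly decrease left to right, and rows weakly
   increase: k-th smallest entry of a column <= k-th smallest entry of the
   next column to its right *)
Definition colseq (C : {set 'I_n}) : seq nat := map val (enum C).
Definition col_rel (A B : {set 'I_n}) : bool :=
  (#|B| <= #|A|)%N &&
  all (fun k => nth 0%N (colseq A) k <= nth 0%N (colseq B) k)%N (iota 0 #|B|).
Definition semistandard (T : seq {set 'I_n}) : bool := sorted col_rel T.

(* T^0_mu: column j (j = 1..mu_1) is {1, ..., mu'_j} *)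
Definition colset (m : nat) : {set 'I_n} := [set i : 'I_n | (i < m)%N].
Definition conjp (mu : 'I_n -> nat) (j : nat) : nat := #|[set i : 'I_n | (j <= mu i)%N]|.
Definition T0 (mu : 'I_n -> nat) : seq {set 'I_n} :=
  [seq colset (conjp mu j) | j <- iota 1 (\max_(i : 'I_n) mu i)].

End Hecke.

(* Main.v *)
Require Import Defs.
From HB Require Import structures.
From mathcomp Require Import all_boot all_order all_algebra all_fingroup.
From mathcomp Require Import zify.
From mathcomp Require classical_sets.
Set Implicit Arguments. Unset Strict Implicit. Unset Printing Implicit Defensive.
Import GRing.Theory.


Section Perm.
Variable n : nat.
Implicit Types (w x y u v : 'S_n).

Lemma pcompE (f g : 'S_n) k : Defs.pcomp f g k = f (g k).
Proof. by rewrite /Defs.pcomp permM. Qed.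

Definition Inv w : {set 'I_n * 'I_n} :=
  [set p : 'I_n * 'I_n | (p.1 < p.2)%N && (w p.2 < w p.1)%N].

Lemma plenE w : plen w = #|Inv w|. Proof. by []. Qed.

Lemma inInv w p : (p \in Inv w) = ((p.1 < p.2) && (w p.2 < w p.1)).
Proof. by rewrite inE. Qed.

Lemma plen1 : plen (1 : 'S_n) = 0.
Proof.
rewrite plenE; apply/eqP; rewrite cards_eq0; apply/eqP/setP=> p.
rewrite inInv !perm1 inE; apply/negbTE; apply/negP=> /andP[]; lia.
Qed.

Lemma card_colset m : m <= n -> #|colset n m| = m.
Proof.
move=> hm.
have -> : colset n m = [set widen_ord hm i | i in 'I_m].
  apply/setP=> x; rewrite inE; apply/idP/imsetP.
    move=> xm; exists (Ordinal xm) => //; exact: val_inj.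
  by case=> y _ ->; rewrite /= ltn_ord.
rewrite card_imset ?card_ord // => a b /(congr1 val) /= e; exact: val_inj.
Qed.

Lemma incr_id u : (forall a b : 'I_n, a < b -> u a < u b) -> u = 1%g.
Proof.
move=> inc.
have ge : forall (v : 'S_n), (forall a b : 'I_n, a < b -> v a < v b) ->
   forall a : 'I_n, a <= v a.
  move=> v incv a.
  have := card_colset (ltnW (ltn_ord a)).
  have := card_colset (ltnW (ltn_ord (v a))).
  move=> e1 e2; rewrite -{1}e2 -e1 -(card_imset _ (@perm_inj _ v)).
  apply: subset_leq_card; apply/subsetP=> y /imsetP[x]; rewrite !inE => xa ->.
  exact: incv.
have incV : forall a b : 'I_n, a < b -> u^-1%g a < u^-1%g b.
  move=> a b ab; case: (ltngtP (u^-1%g a) (u^-1%g b)) => // h.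
    have := inc _ _ h; rewrite !permKV; lia.
  have /val_inj h' := h; have := congr1 u h'; rewrite !permKV => e.
  by move: ab; rewrite e ltnn.
apply/permP=> a; rewrite perm1; apply: val_inj; apply/eqP; rewrite eqn_leq.
rewrite ge // andbT.
have := ge _ incV (u a); rewrite permK //.
Qed.

Lemma plen_eq0 w : plen w = 0 -> w = 1%g.
Proof.
move=> /eqP; rewrite plenE cards_eq0 => /eqP h.
apply: incr_id => a b ab.
case: (ltngtP (w a) (w b)) => // h'.
  have : (a, b) \in Inv w by rewrite inInv /= ab h'.
  by rewrite h inE.
have /val_inj := h'; move/perm_inj => e; by move: ab; rewrite e ltnn.
Qed.

Definition pm y (p : 'I_n * 'I_n) := (y^-1%g p.1, y^-1%g p.2).

Lemma pm_inj y : injective (pm y).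
Proof.
move=> [a b] [c d] /= [] /(congr1 y) + /(congr1 y); rewrite !permKV.
by move=> -> ->.
Qed.

Lemma Inv_sub x y : Inv (Defs.pcomp x y) \subset Inv y :|: pm y @: Inv x.
Proof.
apply/subsetP=> [[p q]]; rewrite inInv /= !pcompE => /andP[pq h].
rewrite inE inInv /= pq /=.
case: (ltngtP (y q) (y p)) => //= h2.
  apply/imsetP; exists (y p, y q); first by rewrite inInv /= h2.
  by rewrite /pm /= !permK.
by move: h; rewrite (val_inj h2) ltnn.
Qed.

Lemma plen_sub x y : plen (Defs.pcomp x y) <= plen x + plen y.
Proof.
rewrite !plenE addnC; apply: leq_trans (subset_leq_card (Inv_sub x y)) _.
apply: leq_trans (leq_card_setU _ _) _.
by rewrite leq_add2l leq_imset_card.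
Qed.


Lemma sgen_val (i : 'I_n) : i.+1 < n -> nat_of_ord (insubd i i.+1) = i.+1.
Proof. by move=> h; rewrite val_insubd h. Qed.

Lemma sgenK (i : 'I_n) x : Defs.pcomp (sgen i) (Defs.pcomp (sgen i) x) = x.
Proof. by rewrite /Defs.pcomp /sgen -mulgA tperm2 mulg1. Qed.

Lemma sgen_lt (i : 'I_n) (a b : 'I_n) : i.+1 < n ->
  sgen i a < sgen i b -> (a < b) || ((val a == i.+1) && (val b == i)).
Proof.
move=> hi; rewrite /sgen.
have : nat_of_ord (insubd i i.+1) = i.+1 := sgen_val hi.
move: (insubd i i.+1) => j hv.
have nv : forall c d : 'I_n, c <> d -> nat_of_ord c <> nat_of_ord d.
  by move=> c d cd /val_inj.
case: tpermP => [->|->|/nv a1 /nv a2]; case: tpermP => [->|->|/nv b1 /nv b2];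
  rewrite ?hv /=; try lia.
Qed.

Lemma plen_sgen (i : 'I_n) : i.+1 < n -> plen (sgen i) = 1.
Proof.
move=> hi; rewrite plenE; have hv := sgen_val hi.
have -> : Inv (sgen i) = [set (i, insubd i i.+1)].
  apply/setP=> [[p q]]; rewrite inInv inE /=; apply/idP/idP.
    move=> /andP[pq /(sgen_lt hi)]; rewrite ltnNge (ltnW pq) /= => /andP[/eqP e1 /eqP e2].
    by apply/eqP; congr pair; apply: val_inj => //=; rewrite hv.
  move=> /eqP [-> ->]; rewrite hv ltnSn /= /sgen tpermL tpermR hv; lia.
exact: cards1.
Qed.

Lemma plen_sgen_le (i : 'I_n) x : i.+1 < n ->
  plen x <= (plen (Defs.pcomp (sgen i) x)).+1.
Proof.
move=> hi; have := plen_sub (sgen i) (Defs.pcomp (sgen i) x).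
by rewrite sgenK plen_sgen.
Qed.

Lemma plen_desc (i : 'I_n) w : i.+1 < n ->
  w^-1%g (insubd i i.+1) < w^-1%g i -> plen (Defs.pcomp (sgen i) w) < plen w.
Proof.
move=> hi hw; rewrite !plenE; apply: proper_card; apply/properP; split.
  apply/subsetP=> [[p q]]; rewrite !inInv /= !pcompE => /andP[pq h].
  rewrite pq /=; case/orP: (sgen_lt hi h) => // /andP[/eqP e1 /eqP e2].
  have eq1 : w q = insubd i i.+1 by apply: val_inj; rewrite /= e1 sgen_val.
  have eq2 : w p = i by apply: val_inj.
  move: hw; rewrite -eq1 -eq2 !permK; lia.
exists (w^-1%g (insubd i i.+1), w^-1%g i).
  by rewrite inInv /= hw !permKV sgen_val ?ltnSn.
rewrite inInv /= !pcompE !permKV /sgen tpermL tpermR negb_and hw /= sgen_val //; lia.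
Qed.

Lemma nat_desc (g : nat -> nat) a b : a <= b -> g b < g a ->
  exists k, [/\ a <= k, k < b & g k.+1 < g k].
Proof.
elim: b => [|b IH] ab gb; first by move: ab gb; rewrite leqn0 => /eqP ->; rewrite ltnn.
case: (leqP a b) => ab'; last first.
  have e : a = b.+1 by lia.
  by move: gb; rewrite e ltnn.
case: (ltnP (g b.+1) (g b)) => h; first by exists b; split.
have [k [k1 k2 k3]] := IH ab' (leq_ltn_trans h gb).
by exists k; split => //; lia.
Qed.

Lemma desc_exists w : w != 1%g ->
  exists i : 'I_n, i.+1 < n /\ plen (Defs.pcomp (sgen i) w) < plen w.
Proof.
move=> w1; have : plen w != 0 by apply/contra: w1 => /eqP/plen_eq0 ->.
rewrite plenE cards_eq0 => /set0Pn [[p q]]; rewrite inInv /= => /andP[pq h].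
pose g k := val (w^-1%g (insubd p k)).
have gE : forall c : 'I_n, g c = w^-1%g c by move=> c; rewrite /g valKd.
have [k [k1 k2 k3]] : exists k, [/\ w q <= k, k < w p & g k.+1 < g k].
  by apply: nat_desc; [exact: ltnW | rewrite !gE !permK].
have kk : g k.+1 < g k := k3.
have kn : k < n by have := ltn_ord (w p); lia.
have k1n : k.+1 < n by have := ltn_ord (w p); lia.
pose i : 'I_n := Ordinal kn.
exists i; split => //; apply: plen_desc => //.
have -> : insubd i i.+1 = insubd p k.+1 by apply: val_inj; rewrite !val_insubd k1n.
have -> : i = insubd p k by apply: val_inj; rewrite val_insubd kn.
exact: k3.
Qed.

End Perm.


Section Hecke2.
Local Open Scope ring_scope.
Variables (R : comUnitRingType) (t : R) (n : nat).
Local Notation hecke := {ffun 'S_n -> R}.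
Local Notation pc := (@Defs.pcomp n).

Lemma pcA (f g h : 'S_n) : pc f (pc g h) = pc (pc f g) h.
Proof. by rewrite /Defs.pcomp mulgA. Qed.

Lemma pc1 (f : 'S_n) : pc f 1%g = f.
Proof. by rewrite /Defs.pcomp mul1g. Qed.
Lemma pc1l (f : 'S_n) : pc 1%g f = f.
Proof. by rewrite /Defs.pcomp mulg1. Qed.

Lemma TleftD (i : 'I_n) (a b : hecke) : Tleft t i (a + b) = Tleft t i a + Tleft t i b.
Proof.
apply/ffunP=> v; rewrite !ffunE; case: ifP => _; rewrite ?ffunE.
  by rewrite mulrDr addrACA.
by rewrite mulrDr.
Qed.

Lemma Tleft0 (i : 'I_n) : Tleft t i (0 : hecke) = 0.
Proof. by apply/ffunP=> v; rewrite !ffunE; case: ifP => _; rewrite ?ffunE ?mulr0 ?addr0. Qed.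

Lemma TleftZ (i : 'I_n) k (a : hecke) : Tleft t i (hscale k a) = hscale k (Tleft t i a).
Proof.
apply/ffunP=> v; rewrite !ffunE; case: ifP => _; rewrite ?ffunE.
  by rewrite mulrDr mulrCA.
by rewrite mulrCA.
Qed.

Lemma foldrD (s : seq 'I_n) (a b : hecke) : foldr (@Tleft R t n) (a + b) s = foldr (@Tleft R t n) a s + foldr (@Tleft R t n) b s.
Proof. by elim: s => //= i s ->; rewrite TleftD. Qed.
Lemma foldr0 (s : seq 'I_n) : foldr (@Tleft R t n) (0 : hecke) s = 0.
Proof. by elim: s => //= i s ->; rewrite Tleft0. Qed.
Lemma foldrZ (s : seq 'I_n) k (a : hecke) : foldr (@Tleft R t n) (hscale k a) s = hscale k (foldr (@Tleft R t n) a s).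
Proof. by elim: s => //= i s ->; rewrite TleftZ. Qed.

Lemma TwD (w : 'S_n) (a b : hecke) : Tw_mul t w (a + b) = Tw_mul t w a + Tw_mul t w b.
Proof. exact: foldrD. Qed.
Lemma Tw0 (w : 'S_n) : Tw_mul t w (0 : hecke) = 0.
Proof. exact: foldr0. Qed.
Lemma TwZ (w : 'S_n) k (a : hecke) : Tw_mul t w (hscale k a) = hscale k (Tw_mul t w a).
Proof. exact: foldrZ. Qed.

Lemma Tw_sum (w : 'S_n) (I : finType) (P : pred I) (F : I -> hecke) :
  Tw_mul t w (\sum_(j | P j) F j) = \sum_(j | P j) Tw_mul t w (F j).
Proof. exact: (big_morph _ (TwD w) (Tw0 w)). Qed.

Lemma hscale0 (a : hecke) : hscale 0 a = 0.
Proof. by apply/ffunP=> v; rewrite !ffunE mul0r. Qed.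
Lemma hscale1 (a : hecke) : hscale 1 a = a.
Proof. by apply/ffunP=> v; rewrite !ffunE mul1r. Qed.

Lemma hexpand (g : hecke) : g = \sum_v hscale (g v) (Tb R v).
Proof.
apply/ffunP=> x; rewrite sum_ffunE (bigD1 x) //= big1 ?addr0.
  by rewrite !ffunE eqxx mulr1.
by move=> y yx; rewrite !ffunE eq_sym (negbTE yx) mulr0.
Qed.

Lemma Tleft_Tb (i : 'I_n) (x : 'S_n) : (i.+1 < n)%N -> (plen x < plen (pc (sgen i) x))%N ->
  Tleft t i (Tb R x) = Tb R (pc (sgen i) x).
Proof.
move=> hi hl; apply/ffunP=> v; rewrite !ffunE.
case: ifP => hv; rewrite ?ffunE.
  case: (eqVneq v (pc (sgen i) x)) => [->|vne].
    by rewrite sgenK eqxx (_ : (_ == x) = false) ?mulr0 ?addr0 //; apply/negbTE;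
      apply/eqP => e; move: hl; rewrite -{1}e ltnn.
  have -> : (pc (sgen i) v == x) = false.
    by apply/negbTE; apply: contra vne => /eqP <-; rewrite sgenK.
  case: (eqVneq v x) => [e|]; last by rewrite mulr0 addr0.
  by move: hv hl; rewrite e; lia.
case: (eqVneq v (pc (sgen i) x)) => [e|vne].
  by move: hv; rewrite e sgenK hl.
have -> : (pc (sgen i) v == x) = false.
  by apply/negbTE; apply: contra vne => /eqP <-; rewrite sgenK.
by rewrite mulr0.
Qed.

Lemma Tw_aux k (v : 'S_n) : forall w : 'S_n, (plen w <= k)%N -> plen (pc w v) = (plen w + plen v)%N ->
  foldr (@Tleft R t n) (Tb R v) (redword_aux k w) = Tb R (pc w v).
Proof.
elim: k => [|k IH] w hk hadd /=.
  by move: hk; rewrite leqn0 => /eqP/plen_eq0 ->; rewrite pc1l.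
case: pickP => [i /andP[hi hd]|none] /=.
  set w' := pc (sgen i) w.
  have e1 : pc w v = pc (sgen i) (pc w' v) by rewrite /w' -pcA sgenK.
  have h1 := plen_sgen_le (pc w v) hi.
  have h2 := plen_sub w' v.
  rewrite pcA -/w' in h1.
  rewrite -/w' in hd.
  rewrite IH; first last.
  - lia.
  - lia.
  rewrite Tleft_Tb //; first by rewrite -e1.
  rewrite -e1; lia.
have -> : w = 1%g.
  apply/eqP; apply/negPn/negP => /desc_exists [i [hi hd]].
  by have := none i; rewrite hi hd.
by rewrite pc1l.
Qed.

Lemma Tw_Tb (w v : 'S_n) : plen (pc w v) = (plen w + plen v)%N ->
  Tw_mul t w (Tb R v) = Tb R (pc w v).
Proof. by move=> h; apply: Tw_aux. Qed.

Lemma Tw1 (g : hecke) : Tw_mul t 1%g g = g.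
Proof. by rewrite /Tw_mul /redword plen1. Qed.

Lemma hmulTb (u : 'S_n) (g : hecke) : hmul t (Tb R u) g = Tw_mul t u g.
Proof.
rewrite /hmul (bigD1 u) //= big1 ?addr0.
  by rewrite ffunE eqxx hscale1.
by move=> y yu; rewrite ffunE (negbTE yu) hscale0.
Qed.

Lemma hmul1l (g : hecke) : hmul t (hone R n) g = g.
Proof. by rewrite /hone hmulTb Tw1. Qed.

Lemma hmul1r (g : hecke) : hmul t g (hone R n) = g.
Proof.
rewrite [RHS]hexpand /hmul; apply: eq_bigr => w _.
by rewrite /hone Tw_Tb pc1 // plen1 addn0.
Qed.

Lemma hinv1 : hinv t (hone R n) = hone R n.
Proof.
apply: classical_sets.xget_unique; first by rewrite hmul1l.
by move=> g [_]; rewrite hmul1r.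
Qed.

End Hecke2.


Section Col.
Variable n : nat.
Local Notation pc := (@Defs.pcomp n).
Implicit Types (F E : {set 'I_n}).

Lemma enum_filter (A : {set 'I_n}) : enum A = filter (mem A) (enum 'I_n).
Proof. by rewrite enumT. Qed.

Lemma sorted_enum_set (A : {set 'I_n}) : sorted ltn (map val (enum A)).
Proof.
rewrite sorted_map enum_filter; apply: sorted_filter; first by move=> a b c /=; apply: ltn_trans.
by rewrite -sorted_map val_enum_ord iota_ltn_sorted.
Qed.

Definition cs F := enum F ++ enum (~: F).

Lemma size_cs F : size (cs F) = n.
Proof. by rewrite size_cat -!cardE cardsC card_ord. Qed.

Lemma uniq_cs F : uniq (cs F).
Proof.
rewrite cat_uniq !enum_uniq /= andbT; apply/hasPn => x; rewrite !mem_enum inE.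
by move=> xF; rewrite xF.
Qed.

Lemma ucol_fun_inj F : injective (ucol_fun F).
Proof.
move=> a b; rewrite /ucol_fun -/(cs F).
rewrite (set_nth_default a b); last by rewrite size_cs.
move/eqP; rewrite nth_uniq ?size_cs ?uniq_cs // => /eqP; exact: val_inj.
Qed.

Lemma ucolE F k : ucol F k = ucol_fun F k.
Proof.
rewrite /ucol; case: pickP => [w /forallP /(_ k) /eqP //|none].
have := none (perm (@ucol_fun_inj F)); case/negP; apply/forallP => j.
by rewrite permE.
Qed.

Lemma ucol_in F k : (ucol F k \in F) = (k < #|F|).
Proof.
rewrite ucolE /ucol_fun nth_cat -cardE.
case: ifP => h.
  by rewrite -(mem_enum (mem F)) mem_nth // -cardE.
apply/negbTE; rewrite -in_setC -(mem_enum (mem (~: F))) mem_nth //.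
move/negbT: h; rewrite -leqNgt => h.
rewrite -cardE; have := cardsC F; rewrite card_ord => hc; by rewrite ltn_subLR // hc ltn_ord.
Qed.

Lemma ucolV_lt F x : ((ucol F)^-1%g x < #|F|) = (x \in F).
Proof. by rewrite -ucol_in permKV. Qed.

Lemma enum_nth_lt (A : {set 'I_n}) (x0 y0 : 'I_n) i j :
  i < j -> j < size (enum A) -> nth x0 (enum A) i < nth y0 (enum A) j.
Proof.
move=> ij jA; have iA := ltn_trans ij jA.
rewrite -(nth_map x0 0 val) // -(nth_map y0 0 val) //.
apply: (sorted_ltn_nth ltn_trans) => //; rewrite ?inE ?size_map //.
exact: sorted_enum_set.
Qed.

Lemma ucol_mono F (a b : 'I_n) : a < b -> (b < #|F|) || (#|F| <= a) ->
  ucol F a < ucol F b.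
Proof.
move=> ab h; rewrite !ucolE /ucol_fun !nth_cat.
have kn := ltn_ord b.
have hc := cardsC F; rewrite card_ord in hc.
have -> : size (enum F) = #|F| by rewrite cardE.
case/orP: h => h.
  rewrite h (ltn_trans ab h); apply: enum_nth_lt => //; by rewrite -cardE.
have ha : (a < #|F|) = false by rewrite ltnNge h.
have hb : (b < #|F|) = false by rewrite ltnNge (leq_trans h (ltnW ab)).
rewrite ha hb; apply: enum_nth_lt; first lia.
have -> : size (enum (~: F)) = #|~: F| by rewrite cardE.
lia.
Qed.

Lemma stab_varpiP (v : 'S_n) l :
  reflect (forall j, (v j < l) = (j < l)) (v \in stab (varpi l)).
Proof.
rewrite inE; apply: (iffP forallP) => h j.
  by move: (h j); rewrite /varpi; case: (v j < l); case: (j < l).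
by rewrite /varpi h.
Qed.

Lemma stabM la (u v : 'S_n) : u \in stab la -> v \in stab la -> pc u v \in stab la.
Proof.
rewrite !inE => /forallP hu /forallP hv; apply/forallP => j.
by rewrite pcompE (eqP (hu _)) hv.
Qed.

Lemma stabV la (v : 'S_n) : v \in stab la -> v^-1%g \in stab la.
Proof.
rewrite !inE => /forallP hv; apply/forallP => j.
by have := hv (v^-1%g j); rewrite permKV eq_sym.
Qed.

Lemma stab_cancel la (u v : 'S_n) : u \in stab la -> (pc u v \in stab la) = (v \in stab la).
Proof.
move=> hu; apply/idP/idP; last exact: stabM.
move=> h; have := stabM (stabV hu) h.
by rewrite pcA /Defs.pcomp mulgV mulg1.
Qed.

Lemma plen_add F (v : 'S_n) : v \in stab (varpi #|F|) ->
  plen (pc (ucol F) v) = plen (ucol F) + plen v.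
Proof.
move=> /stab_varpiP hv; set l := #|F| in hv *; set u := ucol F.
have hvV : forall j, (v^-1%g j < l) = (j < l).
  by move=> j; rewrite -hv permKV.
apply/eqP; rewrite eqn_leq plen_sub /=.
have crossu : forall a b : 'I_n, a < b -> u b < u a -> (a < l) && (l <= b).
  move=> a b ab ba.
  have : ~~ (u a < u b) by rewrite -leqNgt ltnW.
  case: (ltnP a l) => al; case: (leqP l b) => lb //; case/negP;
    apply: ucol_mono => //; by rewrite ?lb ?al ?orbT.
have s1 : Inv v \subset Inv (pc u v).
  apply/subsetP => [[p q]]; rewrite !inInv /= pcompE pcompE => /andP[pq h].
  rewrite pq /=; apply: ucol_mono => //; rewrite -/l.
  case: (ltnP q l) => ql.
    by rewrite hv (ltn_trans pq ql).
  apply/orP; right; rewrite leqNgt hv -leqNgt; exact: ql.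
have s2 : pm v @: Inv u \subset Inv (pc u v).
  apply/subsetP => x /imsetP [[a b]]; rewrite inInv /= => /andP[ab h] ->.
  have /andP[al lb] := crossu _ _ ab h.
  rewrite inInv /= !pcompE !permKV h andbT.
  have : v^-1%g a < l by rewrite hvV.
  have : ~~ (v^-1%g b < l) by rewrite hvV -leqNgt.
  lia.
have dis : Inv v :&: pm v @: Inv u = set0.
  apply/setP => x; rewrite !inE.
  apply/negbTE/negP => /andP[] /andP[_ h1] /imsetP [[a b]]; rewrite inInv /= => /andP[ab _] e.
  by move: h1; rewrite e /= !permKV; lia.
have := subset_leq_card (introT subUsetP (conj s1 s2)).
rewrite cardsU dis cards0 subn0 card_imset; last exact: pm_inj.
by rewrite addnC.
Qed.

End Col.


Section Dec.
Local Open Scope ring_scope.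
Variables (R : comUnitRingType) (t : R) (n : nat).
Local Notation hecke := {ffun 'S_n -> R}.
Local Notation pc := (@Defs.pcomp n).
Implicit Types (F E G : {set 'I_n}).

Lemma stab_varpi_inv (w : 'S_n) l x : w \in stab (varpi l) -> (w^-1%g x < l)%N = (x < l)%N.
Proof. by move=> /stabV /stab_varpiP ->. Qed.

Lemma key_mem G (w : 'S_n) l x : #|G| = l -> w \in stab (varpi l) ->
  (x \in G) = ((pc (ucol G) w)^-1%g x < l)%N.
Proof.
move=> hG hw; rewrite /Defs.pcomp invMg permM stab_varpi_inv //.
by rewrite -hG ucolV_lt.
Qed.

Lemma pc_injr (f : 'S_n) : injective (pc f).
Proof. by move=> a b; rewrite /Defs.pcomp => /mulIg. Qed.

Lemma D1 E F l (v v' : 'S_n) : #|E| = l -> #|F| = l ->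
  v \in stab (varpi l) -> v' \in stab (varpi l) ->
  pc (ucol E) v = pc (ucol F) v' -> E = F.
Proof.
move=> hE hF hv hv' e; apply/setP => x.
by rewrite (key_mem x hE hv) (key_mem x hF hv') e.
Qed.

Lemma D2 l (w : 'S_n) : (l <= n)%N ->
  exists F, exists v, [/\ #|F| = l, v \in stab (varpi l) & w = pc (ucol F) v].
Proof.
move=> ln; pose F := [set x | (w^-1%g x < l)%N].
have hF : #|F| = l.
  have -> : F = w @: colset n l.
    apply/setP => x; rewrite inE; apply/idP/imsetP.
      by move=> h; exists (w^-1%g x); rewrite ?inE ?permKV.
    by case=> y; rewrite inE => yl ->; rewrite permK.
  by rewrite card_imset ?card_colset //; exact: perm_inj.
exists F, (pc ((ucol F)^-1)%g w); split => //.
  apply/stab_varpiP => j; rewrite pcompE -{1}hF ucolV_lt inE permK //.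
by rewrite /Defs.pcomp -mulgA mulVg mulg1.
Qed.

Definition sumD l (f : {ffun {set 'I_n} -> hecke}) : hecke :=
  \sum_(G : {set 'I_n} | #|G| == l) hmul t (Tb R (ucol G)) (f G).

Lemma hmul_col G (g : hecke) : in_Hla (varpi #|G|) g ->
  hmul t (Tb R (ucol G)) g = \sum_v hscale (g v) (Tb R (pc (ucol G) v)).
Proof.
move=> hg; rewrite hmulTb {1}(hexpand g) Tw_sum; apply: eq_bigr => v _.
rewrite TwZ; case: (boolP (v \in stab (varpi #|G|))) => hv.
  by rewrite Tw_Tb // plen_add.
by rewrite hg // !hscale0.
Qed.

Lemma E_eval l (f : {ffun {set 'I_n} -> hecke}) F0 (v0 : 'S_n) :
  (forall G, #|G| = l -> in_Hla (varpi l) (f G)) ->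
  #|F0| = l -> v0 \in stab (varpi l) ->
  sumD l f (pc (ucol F0) v0) = f F0 v0.
Proof.
move=> hf hF0 hv0; rewrite /sumD sum_ffunE.
rewrite (bigD1 F0) ?hF0 //= big1 ?GRing.addr0.
  rewrite hmul_col ?hF0; last by apply: hf.
  rewrite sum_ffunE (bigD1 v0) //= big1 ?GRing.addr0.
    by rewrite !ffunE eqxx GRing.mulr1.
  move=> v vv0; rewrite !ffunE.
  have -> : (pc (ucol F0) v0 == pc (ucol F0) v) = false.
    by apply/negbTE; apply: contra vv0 => /eqP /pc_injr ->.
  by rewrite GRing.mulr0.
move=> G /andP[/eqP hG GF0].
rewrite hmul_col ?hG; last by apply: hf.
rewrite sum_ffunE big1 // => v _; rewrite !ffunE.
case: (boolP (v \in stab (varpi l))) => hv.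
  have -> : (pc (ucol F0) v0 == pc (ucol G) v) = false.
    apply/negbTE/negP => /eqP e.
    by move: GF0; rewrite (D1 hF0 hG hv0 hv e) eqxx.
  by rewrite GRing.mulr0.
by rewrite (hf G hG v hv) GRing.mul0r.
Qed.

Lemma decomp_val l (h : hecke) F (v : 'S_n) : (l <= n)%N -> #|F| = l ->
  decomp t l h F v = if v \in stab (varpi l) then h (pc (ucol F) v) else 0.
Proof.
move=> ln hF.
pose f0 : {ffun {set 'I_n} -> hecke} := [ffun G : {set 'I_n} => if #|G| == l then
   [ffun v => if v \in stab (varpi l) then h (pc (ucol G) v) else 0] else 0].
have hf0 : forall G, #|G| = l -> in_Hla (varpi l) (f0 G).
  by move=> G hG w hw; rewrite !ffunE hG eqxx ffunE (negbTE hw).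
have ex : is_decomp t l h f0.
  split; last split => //.
    apply/ffunP => w; have [G [u [hG hu ->]]] := D2 w ln.
    rewrite -/(sumD l f0) E_eval // !ffunE hG eqxx ffunE hu //.
  by move=> G /eqP hG; rewrite ffunE (negbTE hG).
have := classical_sets.xgetPex 0 (ex_intro _ f0 ex).
rewrite -/(decomp t l h) => -[hd [hin _]].
case: ifP => hv; last by rewrite (hin F hF v) ?hv.
by rewrite {2}hd -/(sumD l _) E_eval.
Qed.

End Dec.


Section Comb.
Variable n : nat.
Local Notation pc := (@Defs.pcomp n).
Implicit Types (F E G : {set 'I_n}) (mu la : 'I_n -> nat).

Lemma supp mu (j : 'I_n) : is_partition mu -> mu j != 0 -> j < plength mu.
Proof.
move=> hmu hj; rewrite /plength.
have -> : j < #|[set i | mu i != 0]| = (#|colset n j.+1| <= #|[set i | mu i != 0]|).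
  by rewrite card_colset.
apply: subset_leq_card; apply/subsetP => i; rewrite !inE ltnS => ij.
by rewrite -lt0n; apply: leq_trans (hmu _ _ ij); rewrite lt0n.
Qed.

Lemma plength_le mu : plength mu <= n.
Proof. by rewrite /plength; apply: leq_trans (max_card _) _; rewrite card_ord. Qed.

Lemma stab_ext la la' : la =1 la' -> stab la = stab la'.
Proof.
by move=> e; apply/setP => w; rewrite !inE; apply: eq_forallb => j; rewrite !e.
Qed.

Lemma stab_wadd mu l (v : 'S_n) : is_partition mu -> plength mu <= l ->
  (v \in stab (wadd (varpi l) mu)) = (v \in stab (varpi l)) && (v \in stab mu).
Proof.
move=> hmu hl.
have hz : forall j : 'I_n, ~~ (j < l) -> mu j = 0.
  move=> j; apply: contraNeq => h; have := supp hmu h; lia.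
have hw : forall j : 'I_n, (j < l) = (0 < wadd (varpi l) mu j).
  move=> j; rewrite /wadd /varpi; case: (boolP (j < l)) => h //=.
  by rewrite hz.
apply/idP/andP.
  rewrite inE => /forallP hv.
  have h1 : forall j, (v j < l) = (j < l).
    by move=> j; rewrite !hw (eqP (hv j)).
  split; first by apply/stab_varpiP.
  rewrite inE; apply/forallP => j; have := hv j; rewrite /wadd /varpi h1; lia.
case=> /stab_varpiP h1; rewrite !inE => /forallP h2; apply/forallP => j.
by rewrite /wadd /varpi h1 (eqP (h2 j)).
Qed.

Lemma ucol_stab mu F : is_partition mu ->
  (forall j : 'I_n, j < plength mu -> val (ucol F j) = j) -> ucol F \in stab mu.
Proof.
move=> hmu hF; rewrite inE; apply/forallP => j.
case: (ltnP j (plength mu)) => hj.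
  by rewrite (_ : ucol F j = j) //; apply: val_inj; rewrite /= hF.
have hz : forall k : 'I_n, plength mu <= k -> mu k = 0.
  move=> k hk; apply/eqP; apply: contraTT hk => h; have := supp hmu h; lia.
rewrite (hz j) //; case: (ltnP (ucol F j) (plength mu)) => h; last by rewrite hz.
have e := hF _ h.
have : ucol F (ucol F j) = ucol F j by apply: val_inj.
move/perm_inj => e2; move: h; rewrite e2; lia.
Qed.

Lemma filter_iota_lt m : m <= n -> filter (fun x => x < m) (iota 0 n) = iota 0 m.
Proof.
move=> mn; rewrite -(subnKC mn) iotaD filter_cat add0n.
rewrite (eq_in_filter (a2 := predT)); last by move=> x; rewrite mem_iota.
rewrite filter_predT (eq_in_filter (a2 := pred0)); last by move=> x; rewrite mem_iota /=; lia.
by rewrite filter_pred0 cats0.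
Qed.

Lemma filter_iota_ge m : m <= n -> filter (fun x => ~~ (x < m)) (iota 0 n) = iota m (n - m).
Proof.
move=> mn; rewrite -{1}(subnKC mn) iotaD filter_cat add0n.
rewrite (eq_in_filter (a2 := pred0)); last by move=> x; rewrite mem_iota /=; lia.
rewrite filter_pred0 (eq_in_filter (a2 := predT)); last by move=> x; rewrite mem_iota /=; lia.
by rewrite filter_predT.
Qed.

Lemma colseq_colset m : m <= n -> map val (enum (colset n m)) = iota 0 m.
Proof.
move=> mn; rewrite enum_filter (eq_filter (a2 := preim val (fun x => x < m))).
  by rewrite -filter_map val_enum_ord filter_iota_lt.
by move=> x; rewrite /= inE.
Qed.

Lemma colseqC_colset m : m <= n -> map val (enum (~: colset n m)) = iota m (n - m).
Proof.
move=> mn; rewrite enum_filter (eq_filter (a2 := preim val (fun x => ~~ (x < m)))).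
  by rewrite -filter_map val_enum_ord filter_iota_ge.
by move=> x; rewrite /= !inE.
Qed.

Lemma ucol_colset m : m <= n -> ucol (colset n m) = 1%g.
Proof.
move=> mn; apply/permP => k; rewrite perm1 ucolE /ucol_fun; apply: val_inj => /=.
rewrite -(nth_map k 0 val); last by rewrite size_cat -!cardE cardsC card_ord.
by rewrite map_cat colseq_colset // colseqC_colset // -iotaD subnKC // nth_iota.
Qed.

Lemma sorted_ge (s : seq nat) k : sorted ltn s -> k < size s -> k <= nth 0 s k.
Proof.
move=> hs; elim: k => [|k IH] hk //.
have h : nth 0 s k < nth 0 s k.+1.
  by apply: (sorted_ltn_nth ltn_trans) => //; rewrite inE ltnW.
have := IH (ltnW hk); lia.
Qed.

Lemma ucol_fix_semi mu F : #|F| >= plength mu ->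
  col_rel F (colset n (plength mu)) ->
  forall j : 'I_n, j < plength mu -> val (ucol F j) = j.
Proof.
move=> hF /andP[_ /allP ha] j hj.
have pn := plength_le mu.
have := ha j; rewrite card_colset // mem_iota /= hj => /(_ isT).
rewrite /colseq colseq_colset // nth_iota //= => hle.
have hjF : j < size (enum F) by rewrite -cardE; lia.
have := sorted_ge (sorted_enum_set F) (k := j); rewrite size_map => /(_ hjF) hge.
rewrite ucolE /ucol_fun nth_cat hjF.
rewrite -(nth_map j 0 val) //.
apply/eqP; rewrite eqn_leq hge andbT; exact: hle.
Qed.

End Comb.


Section Main.
Variables (R : comUnitRingType) (t : R) (n : nat).
Local Notation pc := (@Defs.pcomp n).
Implicit Types (F E G : {set 'I_n}) (mu la : 'I_n -> nat).

Definition mu1 mu : 'I_n -> nat := fun i => (mu i).-1.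

Lemma max_pred mu : \max_(i : 'I_n) mu1 mu i = (\max_(i : 'I_n) mu i).-1.
Proof.
rewrite /mu1; apply: esym; apply: (big_morph predn) => //.
move=> a b; lia.
Qed.

Lemma conjp1 mu : conjp mu 1 = plength mu.
Proof. by apply: eq_card => i; rewrite !inE lt0n. Qed.

Lemma conjp_pred mu j : 0 < j -> conjp (mu1 mu) j = conjp mu j.+1.
Proof. by move=> hj; apply: eq_card => i; rewrite !inE /mu1; lia. Qed.

Lemma T0_nil mu : \max_(i : 'I_n) mu i = 0 -> T0 mu = [::].
Proof. by rewrite /T0 => ->. Qed.

Lemma T0_cons mu M : \max_(i : 'I_n) mu i = M.+1 ->
  T0 mu = colset n (plength mu) :: T0 (mu1 mu).
Proof.
move=> hM; rewrite /T0 max_pred hM /= conjp1; congr cons.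
rewrite (iotaDl 1 1) -map_comp; apply/eq_in_map => x; rewrite mem_iota => /andP[h1 _] /=.
by rewrite add1n conjp_pred.
Qed.

Lemma mu1_part mu : is_partition mu -> is_partition (mu1 mu).
Proof. by move=> h i j ij; rewrite /mu1; have := h i j ij; lia. Qed.

Lemma plength_mu1 mu : plength (mu1 mu) <= plength mu.
Proof.
apply: subset_leq_card; apply/subsetP => i; rewrite !inE /mu1; lia.
Qed.

Lemma supp_eq mu : is_partition mu -> [set i | mu i != 0] = colset n (plength mu).
Proof.
move=> hmu; apply/eqP; rewrite eqEcard card_colset ?plength_le // leqnn andbT.
by apply/subsetP => i; rewrite !inE => /(supp hmu).
Qed.

Lemma wadd_mu1 mu : is_partition mu -> wadd (varpi (plength mu)) (mu1 mu) =1 mu.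
Proof.
move=> hmu j; rewrite /wadd /varpi /mu1.
case: (boolP (j < plength mu)) => h /=.
  have : j \in [set i | mu i != 0] by rewrite supp_eq // inE.
  rewrite inE; lia.
have : mu j = 0 by apply/eqP; apply: contraNT h => h'; exact: supp hmu h'.
lia.
Qed.

Lemma one_ext la la' : la =1 la' -> one_ R la = one_ R la'.
Proof. by move=> e; rewrite /one_ (stab_ext e). Qed.

Lemma decomp_one mu l F : is_partition mu -> plength mu <= l -> l <= n -> #|F| = l ->
  (forall j : 'I_n, j < plength mu -> val (ucol F j) = j) ->
  decomp t l (one_ R mu) F = one_ R (wadd (varpi l) mu).
Proof.
move=> hmu hl ln hF hfix; apply/ffunP => v.
rewrite decomp_val // !ffunE stab_wadd //.
case: (boolP (v \in stab (varpi l))) => hv //=.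
by rewrite stab_cancel // ucol_stab.
Qed.

Lemma Tpref_colset m : m <= n -> Tpref t (colset n m) = hone R n.
Proof.
move=> mn; rewrite /Tpref ucol_colset // invg1 plen1 /tpow expr0 hinv1 hscale1 //.
Qed.

Lemma Psi_cons2 (C D : {set 'I_n}) (s : seq {set 'I_n}) :
  Psi t (C :: D :: s) = hmul t (Tpref t C) (decomp t #|C| (Psi t (D :: s)) C).
Proof. by []. Qed.

Lemma Psi_one (C : {set 'I_n}) : Psi t [:: C] = hmul t (Tpref t C) (one_ R (varpi #|C|)).
Proof. by []. Qed.

Lemma PsiA M : forall mu, is_partition mu -> \max_(i : 'I_n) mu i = M ->
  Psi t (T0 mu) = one_ R mu.
Proof.
elim: M => [|M IH] mu hmu hM.
  rewrite T0_nil //=; apply: one_ext => j; apply/eqP; rewrite eq_sym -leqn0 -hM.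
  exact: (leq_bigmax j).
have pn := plength_le mu.
rewrite (T0_cons hM).
have hM1 : \max_(i : 'I_n) mu1 mu i = M by rewrite max_pred hM.
have hw := wadd_mu1 hmu.
case E : (T0 (mu1 mu)) => [|x s]; [rewrite Psi_one | rewrite Psi_cons2].
  rewrite Tpref_colset // hmul1l card_colset //; apply: one_ext => j.
  rewrite -hw /wadd /mu1.
  have : mu j <= M.+1 by rewrite -hM; exact: (leq_bigmax j).
  move: E; rewrite /T0 hM1; case: M {IH hM hM1} => // _ h.
  lia.
rewrite -E (IH _ (mu1_part hmu) hM1) Tpref_colset // hmul1l card_colset //.
rewrite decomp_one ?card_colset //; first exact: one_ext.
all: try exact: mu1_part. all: try exact: plength_mu1.
move=> j hj; by rewrite ucol_colset // perm1.
Qed.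

End Main.

Local Open Scope ring_scope.

Theorem proposition6p1 (R : comUnitRingType) (t : R) (ht : t \is a GRing.unit)
    (n : nat) (hn : (0 < n)%N) :
  (forall (mu : 'I_n -> nat) (l : nat) (F : {set 'I_n}),
      is_partition mu -> (1 <= l <= n)%N -> (plength mu <= l)%N ->
      #|F| = l -> semistandard (F :: T0 mu) ->
      Psi t (F :: T0 mu)
      = hmul t (hscale (tpow t (plen (ucol F))) (hinv t (Tb R ((ucol F)^-1)%g)))
               (one_ R (wadd (varpi l) mu)))
  /\ (forall la : 'I_n -> nat, is_partition la -> Psi t (T0 la) = one_ R la).
Proof.
split; last by move=> la hla; exact: (PsiA t hla (erefl _)).
move=> mu l F hmu /andP[_ ln] hl hF hss.
case hM : (\max_(i : 'I_n) mu i)%N => [|M].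
  rewrite T0_nil // Psi_one hF; congr hmul; apply: one_ext => j.
  rewrite /wadd.
  have : (mu j <= 0)%N by rewrite -hM; exact: (leq_bigmax j).
  by rewrite leqn0 => /eqP ->; rewrite addn0.
move: hss; rewrite (T0_cons hM) => hss.
have hcol : col_rel F (colset n (plength mu)) by case/andP: hss.
rewrite -(T0_cons hM) .
case E : (T0 mu) => [|x s]; first by move: E; rewrite (T0_cons hM).
rewrite Psi_cons2 -E (PsiA t hmu hM) hF decomp_one //; last first.
  by apply: ucol_fix_semi; rewrite ?hF.
Qed.
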